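(* Let $\mathbf{A}$ be a 3-dimensional cyclic Leibniz algebra over $\mathbb{C}$. Then $\mathbf{A}$ is isomorphic to a Leibniz algebra with basis $\{a,a^2,a^3\}$, where $aa=a^2$, $aa^2=a^3$, $a^2v=a^3v=0$ for all $v$, and $aa^3$ is given by one and only one of the following: (1) $aa^3=0$; (2) $aa^3=a^3$; (3) $aa^3=a^2+\alpha_3a^3$ with $\alpha_3\in\mathbb{C}/\sim$, where $\alpha\sim\alpha'$ iff $\alpha'=\pm\alpha$. Here ''one and only one'' means that algebras from different cases are non-isomorphic, and in case (3) the algebras with parameters $\alpha_3,\alpha_3'$ are isomorphic iff $\alpha_3'=\pm\alpha_3$.
   Context: A (left) Leibniz algebra is a vector space with a bilinear product such that $x(yz)=(xy)z+y(xz)$ for all $x,y,z$. A cyclic Leibniz algebra is a Leibniz algebra generated by a single element. For an element $x$ set $x^1=x$ and $x^{j+1}=x\,x^j$. *)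

(* Defs.v *)
From HB Require Import structures.
From mathcomp Require Import all_boot all_order all_algebra.
From mathcomp Require Import complex.
From mathcomp Require Import reals.
Set Implicit Arguments. Unset Strict Implicit. Unset Printing Implicit Defensive.
Import Order.TTheory GRing.Theory Num.Theory.
Local Open Scope ring_scope.

Definition bilinear_prod (K : fieldType) (V : lmodType K) (m : V -> V -> V) :=
  (forall (a : K) x y z, m (a *: x + y) z = a *: m x z + m y z) /\
  (forall (a : K) x y z, m z (a *: x + y) = a *: m z x + m z y).

Definition leibniz_identity (K : fieldType) (V : lmodType K) (m : V -> V -> V) :=
  forall x y z, m x (m y z) = m (m x y) z + m y (m x z).

Definition cyclic_alg (K : fieldType) (V : vectType K) (m : V -> V -> V) :=
  exists x : V, forall U : {vspace V},
    x \in U -> (forall u v, u \in U -> v \in U -> m u v \in U) -> U = fullv.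

Definition alg_iso (K : fieldType) (V W : lmodType K)
    (mV : V -> V -> V) (mW : W -> W -> W) :=
  exists f : V -> W,
    [/\ forall (a : K) x y, f (a *: x + y) = a *: f x + f y,
        bijective f &
        forall x y, f (mV x y) = mW (f x) (f y)].

Definition i0 : 'I_3 := @Ordinal 3 0 isT.
Definition i1 : 'I_3 := @Ordinal 3 1 isT.
Definition i2 : 'I_3 := @Ordinal 3 2 isT.

(* Model algebra on K^3 with basis a = e_0, a^2 = e_1, a^3 = e_2:
   a a = a^2, a a^2 = a^3, a a^3 = p a^2 + q a^3, a^2 v = a^3 v = 0.
   For u = u0 a + u1 a^2 + u2 a^3 and v likewise,
   u v = u0 (v0 a^2 + v1 a^3 + v2 (p a^2 + q a^3)). *)
Definition model_mul (K : fieldType) (p q : K) (u v : 'rV[K]_3) : 'rV[K]_3 :=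
  \row_(i < 3)
     (if i == i1 then u 0 i0 * (v 0 i0 + p * v 0 i2)
      else if i == i2 then u 0 i0 * (v 0 i1 + q * v 0 i2)
      else 0).

(* Main.v *)
Require Import Defs.
From HB Require Import structures.
From mathcomp Require Import all_boot all_order all_algebra.
From mathcomp Require Import complex.
From mathcomp Require Import reals.
Import Order.TTheory GRing.Theory Num.Theory.
From mathcomp Require Import ring.
Local Open Scope ring_scope.



Section Model.
Variable K : fieldType.

Definition r3 (a b c : K) : 'rV[K]_3 :=
  \row_(j < 3) (if j == i0 then a else if j == i1 then b else c).

Lemma rowE3 (u : 'rV[K]_3) : u = r3 (u 0 i0) (u 0 i1) (u 0 i2).
Proof.
apply/rowP => j; rewrite !mxE; case: j => [[|[|[|j]]] Hj] //=.
- by congr (u 0 _); apply: val_inj.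
- by congr (u 0 _); apply: val_inj.
- by congr (u 0 _); apply: val_inj.
Qed.

Lemma r3_eq a b c a' b' c' : r3 a b c = r3 a' b' c' -> [/\ a = a', b = b' & c = c'].
Proof.
move=> E; split.
- by have := congr1 (fun u : 'rV_3 => u 0 i0) E; rewrite !mxE.
- by have := congr1 (fun u : 'rV_3 => u 0 i1) E; rewrite !mxE.
- by have := congr1 (fun u : 'rV_3 => u 0 i2) E; rewrite !mxE.
Qed.

Lemma r3E0 a b c : r3 a b c 0 i0 = a. Proof. by rewrite !mxE. Qed.
Lemma r3E1 a b c : r3 a b c 0 i1 = b. Proof. by rewrite !mxE. Qed.
Lemma r3E2 a b c : r3 a b c 0 i2 = c. Proof. by rewrite !mxE. Qed.

Lemma modelE p q u v : model_mul p q u v =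
  r3 0 (u 0 i0 * (v 0 i0 + p * v 0 i2)) (u 0 i0 * (v 0 i1 + q * v 0 i2)).
Proof.
apply/rowP => j; rewrite !mxE; case: j => [[|[|[|j]]] Hj] //=.
Qed.

Lemma r3D a b c a' b' c' : r3 a b c + r3 a' b' c' = r3 (a + a') (b + b') (c + c').
Proof. by apply/rowP => j; rewrite !mxE; case: ifP => //; case: ifP. Qed.
Lemma r3Z k a b c : k *: r3 a b c = r3 (k * a) (k * b) (k * c).
Proof. by apply/rowP => j; rewrite !mxE; case: ifP => //; case: ifP. Qed.


Lemma iso_params p q p' q' (f : 'rV[K]_3 -> 'rV[K]_3) :
  (forall (a : K) x y, f (a *: x + y) = a *: f x + f y) -> bijective f ->
  (forall x y, f (model_mul p q x y) = model_mul p' q' (f x) (f y)) ->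
  exists c : K, [/\ c != 0, p = c ^+ 2 * p' & q = c * q'].
Proof.
move=> fl fb fm.
have f0 : f 0 = 0.
  have := fl 1 0 0; rewrite !scale1r addr0 => H.
  by apply: (@addrI _ (f 0)); rewrite addr0 -H.
have fZ a x : f (a *: x) = a *: f x by have := fl a x 0; rewrite !addr0 f0 addr0.
have fD x y : f (x + y) = f x + f y by have := fl 1 x y; rewrite !scale1r.
have finj := bij_inj fb.
set g := f (r3 1 0 0); set c := g 0 i0.
have e1 : model_mul p q (r3 1 0 0) (r3 1 0 0) = r3 0 1 0.
  by rewrite modelE !r3E0 !r3E1 !r3E2; congr r3; ring.
have e2 : model_mul p q (r3 1 0 0) (r3 0 1 0) = r3 0 0 1.
  by rewrite modelE !r3E0 !r3E1 !r3E2; congr r3; ring.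
have e3 : model_mul p q (r3 1 0 0) (r3 0 0 1) = p *: r3 0 1 0 + q *: r3 0 0 1.
  by rewrite modelE !r3E0 !r3E1 !r3E2 !r3Z r3D; congr r3; ring.
have CH (w : 'rV[K]_3) : w 0 i0 = 0 -> model_mul p' q' g (model_mul p' q' g w) =
    (c ^+ 2 * p') *: w + (c * q') *: model_mul p' q' g w.
  move=> w0; rewrite (rowE3 w) w0 !modelE !r3E0 !r3E1 !r3E2 !r3Z r3D -/c.
  congr r3; ring.
have hs : f (r3 0 1 0) = model_mul p' q' g g by rewrite -e1 fm.
have ht : f (r3 0 0 1) = model_mul p' q' g (f (r3 0 1 0)) by rewrite -e2 fm.
have s0 : f (r3 0 1 0) 0 i0 = 0 by rewrite hs modelE r3E0.
have key : f ((c ^+ 2 * p' - p) *: r3 0 1 0 + (c * q' - q) *: r3 0 0 1) = f 0.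
  rewrite f0 fD !fZ.
  have := fm (r3 1 0 0) (r3 0 0 1); rewrite e3 fD !fZ -/g ht CH // -ht => E.
  by rewrite !scalerBl addrACA -opprD -E subrr.
have K0 := finj _ _ key.
have K1 := congr1 (fun v : 'rV_3 => v 0 i1) K0.
have K2 := congr1 (fun v : 'rV_3 => v 0 i2) K0.
rewrite /= !r3Z r3D r3E1 mxE !mulr1 !mulr0 addr0 in K1.
rewrite /= !r3Z r3D r3E2 mxE !mulr1 !mulr0 add0r in K2.
move/eqP: K1; rewrite subr_eq0 => /eqP E1.
move/eqP: K2; rewrite subr_eq0 => /eqP E2.
exists c; split => //.
apply/eqP => c0.
case: fb => h _ hK.
set u := h (r3 1 0 0).
have uE : u = u 0 i0 *: r3 1 0 0 + model_mul p q (r3 1 0 0) (r3 (u 0 i1) (u 0 i2) 0).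
  rewrite {1}(rowE3 u) modelE !r3E0 !r3E1 !r3E2 r3Z r3D; congr r3; ring.
have := congr1 (fun v : 'rV_3 => v 0 i0) (hK (r3 1 0 0)).
rewrite -/u uE fD fZ fm -/g mxE [in X in X = _ -> _]mxE modelE r3E0 r3E0 -/c c0.
by rewrite mulr0 addr0 => /eqP; rewrite eq_sym oner_eq0.
Qed.
End Model.


Arguments r3 {K}.
Section Uniq.
Variable K : fieldType.

Lemma neg_iso (al : K) : alg_iso (model_mul 1 al) (model_mul 1 (- al)).
Proof.
pose f (u : 'rV[K]_3) := r3 (- u 0 i0) (u 0 i1) (- u 0 i2).
have fK : cancel f f.
  by move=> u; rewrite /f !r3E0 !r3E1 !r3E2 !opprK -rowE3.
exists f; split.
- move=> a x y; rewrite /f !mxE r3Z r3D; congr r3; ring.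
- by exists f.
- move=> x y; rewrite /f !modelE !r3E0 !r3E1 !r3E2; congr r3; ring.
Qed.

Lemma id_iso (p q : K) : alg_iso (model_mul p q) (model_mul p q).
Proof. by exists id; split => //; exists id. Qed.

Lemma noniso_params p q p' q' :
  alg_iso (model_mul p q) (model_mul p' q') ->
  exists c : K, [/\ c != 0, p = c ^+ 2 * p' & q = c * q'].
Proof. by case=> f [fl fb fm]; exact: iso_params fl fb fm. Qed.

Lemma u1 : ~ alg_iso (model_mul 0 0) (model_mul (0 : K) 1).
Proof.
move/noniso_params => [c [c0 _]]; rewrite mulr1 => E.
by move: c0; rewrite -E eqxx.
Qed.

Lemma u2 (al : K) : ~ alg_iso (model_mul 0 0) (model_mul 1 al).
Proof.
move/noniso_params => [c [c0 E _]]; move: E; rewrite mulr1 => /eqP.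
by rewrite eq_sym expf_eq0 (negbTE c0) andbF.
Qed.

Lemma u3 (al : K) : ~ alg_iso (model_mul 0 1) (model_mul 1 al).
Proof.
move/noniso_params => [c [c0 E _]]; move: E; rewrite mulr1 => /eqP.
by rewrite eq_sym expf_eq0 (negbTE c0) andbF.
Qed.

Lemma u4 (al al' : K) :
  alg_iso (model_mul 1 al) (model_mul 1 al') <-> (al' = al \/ al' = - al).
Proof.
split.
- move/noniso_params => [c [c0 E1 E2]]; move: E1; rewrite mulr1 => /eqP.
  rewrite eq_sym sqrf_eq1 => /orP [] /eqP Ec; rewrite E2 Ec.
  + by left; rewrite mul1r.
  + by right; rewrite mulN1r opprK.
- by case=> ->; [exact: id_iso | exact: neg_iso].
Qed.
End Uniq.

Set Implicit Arguments.

Section Alg.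
Variable K : fieldType.
Variable V : vectType K.

Lemma mem2P (v y z : V) : v \in <<[:: y; z]>>%VS -> exists k l, v = k *: y + l *: z.
Proof.
rewrite span_cons span_seq1 => /memv_addP [u /vlineP [k ->] [w /vlineP [l ->] ->]].
by exists k, l.
Qed.

Lemma mem3P (v x y z : V) : v \in <<[:: x; y; z]>>%VS ->
  exists k l n, v = k *: x + l *: y + n *: z.
Proof.
rewrite span_cons => /memv_addP [u /vlineP [k ->] [w /mem2P [l [n ->]] ->]].
by exists k, l, n; rewrite addrA.
Qed.

Variable m : V -> V -> V.
Hypothesis hb : bilinear_prod m.
Hypothesis hl : leibniz_identity m.

Lemma m0l z : m 0 z = 0.
Proof.
have := hb.1 1 0 0 z; rewrite !scale1r addr0 => H.
by apply: (@addrI _ (m 0 z)); rewrite addr0 -H.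
Qed.
Lemma m0r z : m z 0 = 0.
Proof.
have := hb.2 1 0 0 z; rewrite !scale1r addr0 => H.
by apply: (@addrI _ (m z 0)); rewrite addr0 -H.
Qed.
Lemma mZl a x z : m (a *: x) z = a *: m x z.
Proof. by have := hb.1 a x 0 z; rewrite !addr0 m0l addr0. Qed.
Lemma mZr a x z : m z (a *: x) = a *: m z x.
Proof. by have := hb.2 a x 0 z; rewrite !addr0 m0r addr0. Qed.
Lemma mDl x y z : m (x + y) z = m x z + m y z.
Proof. by have := hb.1 1 x y z; rewrite !scale1r. Qed.
Lemma mDr x y z : m z (x + y) = m z x + m z y.
Proof. by have := hb.2 1 x y z; rewrite !scale1r. Qed.

Lemma sq0 x z : m (m x x) z = 0.
Proof.
have := hl x x z => H.
by apply: (@addIr _ (m x (m x z))); rewrite add0r -H.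
Qed.

Lemma lann x w : (forall z, m w z = 0) -> forall z, m (m x w) z = 0.
Proof.
move=> Hw z; have := hl x w z; rewrite !Hw m0r => /eqP.
by rewrite addr0 eq_sym => /eqP.
Qed.

Lemma cu0 x z : m (m x (m x x)) z = 0.
Proof. by apply: lann; apply: sq0. Qed.

Lemma qu0 x z : m (m x (m x (m x x))) z = 0.
Proof. by apply: lann; apply: cu0. Qed.

Lemma comb x c0 c1 c2 w :
  m (c0 *: x + c1 *: m x x + c2 *: m x (m x x)) w = c0 *: m x w.
Proof. by rewrite !mDl !mZl sq0 cu0 !scaler0 !addr0. Qed.

End Alg.


Section G.
Variable K : fieldType.
Variable V : vectType K.
Variable m : V -> V -> V.
Hypothesis hb : bilinear_prod m.
Hypothesis hl : leibniz_identity m.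

Lemma Giso (x : V) p q : \dim (fullv : {vspace V}) = 3%N ->
  <<[:: x; m x x; m x (m x x)]>>%VS = fullv ->
  m x (m x (m x x)) = p *: m x x + q *: m x (m x x) ->
  alg_iso m (model_mul p q).
Proof.
move=> hdim hspan h4.
pose X : 3.-tuple V := [tuple x; m x x; m x (m x x)].
have freeX : free X by rewrite /free /= hspan hdim.
pose f (v : V) : 'rV[K]_3 := \row_(i < 3) coord X i v.
pose g (u : 'rV[K]_3) : V := \sum_(i < 3) u 0 i *: X`_i.
have gf : cancel f g.
  move=> v; rewrite [RHS](@coord_span _ _ _ X v) ?hspan ?memvf //.
  by apply: eq_bigr => i _; rewrite mxE.
have fg : cancel g f.
  by move=> u; apply/rowP => j; rewrite mxE coord_sum_free.
have gE u : g u = u 0 i0 *: x + u 0 i1 *: m x x + u 0 i2 *: m x (m x x).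
  rewrite /g !big_ord_recl big_ord0 addr0 /= addrA.
  by congr (_ *: _ + _ *: _ + _ *: _); congr (u 0 _); apply: val_inj.
have gm u v : m (g u) (g v) = g (model_mul p q u v).
  rewrite !gE (comb hb hl) !(mDr hb) !(mZr hb) h4 modelE !r3E0 !r3E1 !r3E2 scale0r add0r.
  rewrite !scalerDr !scalerA addrACA -!scalerDl.
  congr (_ *: _ + _ *: _); ring.
exists f; split.
- by move=> a u v; apply/rowP => i; rewrite !mxE linearP.
- by exists g.
- move=> u v; rewrite -{1}(gf u) -{1}(gf v) gm; exact: fg.
Qed.
End G.


Section F.
Variable K : fieldType.
Variable V : vectType K.
Variable m : V -> V -> V.
Hypothesis hb : bilinear_prod m.
Hypothesis hl : leibniz_identity m.
Hypothesis hdim : \dim (fullv : {vspace V}) = 3%N.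

Lemma find_gen : cyclic_alg m -> exists a : V, exists al2 al3 : K,
  <<[:: a; m a a; m a (m a a)]>>%VS = fullv /\
  m a (m a (m a a)) = al2 *: m a a + al3 *: m a (m a a).
Proof.
case=> a Hc.
have na2 : m a a \notin <[a]>%VS.
  apply/negP => H.
  have U1 : <[a]>%VS = fullv.
    apply: Hc; first exact: memv_line.
    move=> u v /vlineP [k ->] /vlineP [l ->]; rewrite (mZl hb) (mZr hb).
    by do 2 apply: memvZ.
  by have := dim_vline a; rewrite U1 hdim; case: (a != 0).
have a0 : a != 0.
  by apply/eqP => a0; move: na2; rewrite a0 (m0l hb) mem0v.
have a2n0 : m a a != 0 by apply/eqP=> E; move: na2; rewrite E mem0v.
have na3 : m a (m a a) \notin <<[:: m a a; a]>>%VS.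
  apply/negP => H.
  have U2 : <<[:: m a a; a]>>%VS = fullv.
    apply: Hc; first by apply: memv_span; rewrite !inE eqxx orbT.
    move=> u v /mem2P [k [l ->]] /mem2P [k' [l' ->]].
    rewrite (mDl hb) !(mZl hb) (sq0 hl) scaler0 add0r (mDr hb) !(mZr hb).
    apply: memvZ; apply: memvD; apply: memvZ => //.
    by apply: memv_span; rewrite !inE eqxx.
  by have := dim_span [:: m a a; a]; rewrite U2 hdim.
have freeY : free [:: m a (m a a); m a a; a].
  by rewrite free_cons na3 free_cons span_seq1 na2 seq1_free a0.
have spanE : <<[:: a; m a a; m a (m a a)]>>%VS = <<[:: m a (m a a); m a a; a]>>%VS.
  apply: eq_span => v; rewrite !inE.
  by case: (v == a); case: (v == m a a); case: (v == m a (m a a)); rewrite ?orbT.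
have hspan : <<[:: a; m a a; m a (m a a)]>>%VS = fullv.
  apply/eqP; rewrite eqEdim subvf /= hdim spanE.
  by move: freeY; rewrite /free => /eqP ->.
have : m a (m a (m a a)) \in <<[:: a; m a a; m a (m a a)]>>%VS by rewrite hspan memvf.
case/mem3P => [k [l [n E]]].
have k0 : k = 0.
  have := qu0 hb hl a a; rewrite E (comb hb hl) => /eqP.
  by rewrite scaler_eq0 (negbTE a2n0) orbF => /eqP.
by exists a, l, n; split => //; rewrite E k0 scale0r add0r.
Qed.

Lemma scale_gen (a : V) t al2 al3 : t != 0 ->
  <<[:: a; m a a; m a (m a a)]>>%VS = fullv ->
  m a (m a (m a a)) = al2 *: m a a + al3 *: m a (m a a) ->
  <<[:: t *: a; m (t *: a) (t *: a); m (t *: a) (m (t *: a) (t *: a))]>>%VS = fullv /\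
  m (t *: a) (m (t *: a) (m (t *: a) (t *: a))) =
    (t ^+ 2 * al2) *: m (t *: a) (t *: a) + (t * al3) *: m (t *: a) (m (t *: a) (t *: a)).
Proof.
move=> tn hsp h4.
have e2 : m (t *: a) (t *: a) = t ^+ 2 *: m a a.
  by rewrite (mZl hb) (mZr hb) scalerA -expr2.
have e3 : m (t *: a) (m (t *: a) (t *: a)) = t ^+ 3 *: m a (m a a).
  by rewrite e2 (mZl hb) (mZr hb) scalerA -exprS.
split; last first.
  rewrite e3 e2 (mZl hb) (mZr hb) h4 scalerA -exprS !scalerDr !scalerA.
  by congr (_ *: _ + _ *: _); ring.
set X := [:: t *: a; _; _].
have memX v k : k != 0 -> k *: v \in <<X>>%VS -> v \in <<X>>%VS.
  by move=> kn H; rewrite -(scalerK kn v); apply: memvZ.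
apply/eqP; rewrite eqEsubv subvf /= -{1}hsp; apply/span_subvP => v.
rewrite !inE => /or3P [] /eqP ->.
- by apply: (memX _ t tn); apply: memv_span; rewrite inE eqxx.
- apply: (memX _ (t ^+ 2)); first by rewrite expf_neq0.
  by rewrite -e2; apply: memv_span; rewrite !inE eqxx orbT.
- apply: (memX _ (t ^+ 3)); first by rewrite expf_neq0.
  by rewrite -e3; apply: memv_span; rewrite !inE eqxx !orbT.
Qed.
End F.


Theorem corollary4p1 (R : realType) (V : vectType R[i]) (m : V -> V -> V) :
  bilinear_prod m -> leibniz_identity m ->
  \dim (fullv : {vspace V}) = 3%N -> cyclic_alg m ->
  (* existence: A is isomorphic to one of the models *)
  [/\ alg_iso m (model_mul 0 0) \/ alg_iso m (model_mul 0 1) \/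
        (exists al : R[i], alg_iso m (model_mul 1 al)),
  (* uniqueness: algebras from different cases are non-isomorphic *)
      ~ alg_iso (model_mul 0 0) (model_mul (0 : R[i]) 1),
      (forall al : R[i], ~ alg_iso (model_mul 0 0) (model_mul 1 al)),
      (forall al : R[i], ~ alg_iso (model_mul 0 1) (model_mul 1 al)) &
  (* case (3): parameters al, al' give isomorphic algebras iff al' = +- al *)
      forall al al' : R[i],
        alg_iso (model_mul 1 al) (model_mul 1 al') <-> (al' = al \/ al' = - al)].
Proof.
move=> hb hl hdim hcyc; split; [| exact: u1 | exact: u2 | exact: u3 | exact: u4].
have [a [al2 [al3 [hsp h4]]]] := find_gen hb hl hdim hcyc.
have go t p q : t != 0 -> t ^+ 2 * al2 = p -> t * al3 = q -> alg_iso m (model_mul p q).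
  move=> tn <- <-; have [s1 s2] := @scale_gen _ _ m hb a t al2 al3 tn hsp h4.
  exact: (@Giso _ _ m hb hl _ _ _ hdim s1 s2).
have [a2z | a2n] := eqVneq al2 0.
  have [a3z | a3n] := eqVneq al3 0.
    by left; apply: (go 1); rewrite ?oner_eq0 // ?a2z ?a3z ?mulr0.
  right; left; apply: (go al3^-1); rewrite ?invr_eq0 // ?a2z ?mulr0 ?mulVf //.
right; right; exists (sqrtC al2^-1 * al3); apply: (go (sqrtC al2^-1)) => //.
- by rewrite sqrtC_eq0 invr_eq0.
- by rewrite sqrtCK mulVf.
Qed.
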